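(* Let $N\ge2$, $R>0$, let $g:[0,R]\to(0,\infty)$ be smooth, and let $A,B,p,q$ be positive constants with $0<A<B$, all independent of $\epsilon$. For $\epsilon>0$ let $U_\epsilon$ be the unique solution of problem (N* ) described in the context. Then for every $\kappa\in(0,1)$ there is a constant $\widetilde C_{10}>0$ independent of $\epsilon$ such that for all sufficiently small $\epsilon>0$, $$\Big|\int_0^Rs^{N-1}e^{pU_\epsilon(s)}ds-\frac{R^N}{N}\Big|+\Big|\int_0^Rs^{N-1}e^{-qU_\epsilon(s)}ds-\frac{BR^N}{AN}\Big|\le\widetilde C_{10}\,\epsilon^\kappa\log\frac1\epsilon.$$
   Context: Problem (N* ): for $\epsilon>0$, find $U_\epsilon\in C^1([0,R])\cap C^\infty((0,R))$ such that for $r\in(0,R)$ $$\epsilon^2 g(r)\Big[U_\epsilon''(r)+\Big(\frac{N-1}{r}+\frac{g'(r)}{g(r)}\Big)U_\epsilon'(r)\Big]=\frac{R^N}{N}\Big(\frac{Ae^{pU_\epsilon(r)}}{\int_0^R s^{N-1}e^{pU_\epsilon(s)}ds}-\frac{Be^{-qU_\epsilon(r)}}{\int_0^R s^{N-1}e^{-qU_\epsilon(s)}ds}\Big),$$ together with $\int_0^R s^{N-1}U_\epsilon(s)\,ds=0$, $U_\epsilon'(0)=0$ and $U_\epsilon'(R)=\frac{R(A-B)}{\epsilon^2Ng(R)}$; it has a unique solution. *)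

(* Defs.v *)
From Stdlib Require Import Reals.
From Coquelicot Require Import Coquelicot.
Open Scope R_scope.

Definition Icc (a b x : R) : Prop := a <= x <= b.

Definition has_deriv_within (D : R -> Prop) (f : R -> R) (x l : R) : Prop :=
  filterlim (fun y => (f y - f x) / (y - x))
            (within (fun y => D y /\ y <> x) (locally x)) (locally l).

Definition C1_on_closed (Rr : R) (f dU : R -> R) : Prop :=
  (forall x, Icc 0 Rr x -> has_deriv_within (Icc 0 Rr) f x (dU x)) /\
  (forall x, Icc 0 Rr x -> filterlim dU (within (Icc 0 Rr) (locally x)) (locally (dU x))).

Definition smooth_open (a b : R) (f : R -> R) : Prop :=
  forall (n : nat) (x : R), a < x < b -> ex_derive_n f n x.

Definition smooth_closed (a b : R) (g : R -> R) : Prop :=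
  exists d : R, 0 < d /\ smooth_open (a - d) (b + d) g.

Definition Ip (N : nat) (Rr p : R) (U : R -> R) : R :=
  RInt (fun s => s ^ (N - 1) * exp (p * U s)) 0 Rr.
Definition Iq (N : nat) (Rr q : R) (U : R -> R) : R :=
  RInt (fun s => s ^ (N - 1) * exp (- (q * U s))) 0 Rr.

Definition solves_Nstar (N : nat) (Rr A B p q : R) (g : R -> R) (eps : R) (U : R -> R) : Prop :=
  (exists dU : R -> R,
      C1_on_closed Rr U dU /\ dU 0 = 0 /\
      dU Rr = Rr * (A - B) / (eps ^ 2 * INR N * g Rr)) /\
  smooth_open 0 Rr U /\
  (forall r, 0 < r < Rr ->
     eps ^ 2 * g r * (Derive_n U 2 r + ((INR N - 1) / r + Derive g r / g r) * Derive U r)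
     = Rr ^ N / INR N *
       (A * exp (p * U r) / Ip N Rr p U - B * exp (- (q * U r)) / Iq N Rr q U)) /\
  RInt (fun s => s ^ (N - 1) * U s) 0 Rr = 0.

(* Main.v *)
Require Import Defs.
From Stdlib Require Import Reals Lra Lia.
From Coquelicot Require Import Coquelicot.
Open Scope R_scope.

Lemma ballR (x e y : R) : ball x e y <-> Rabs (y - x) < e.
Proof. reflexivity. Qed.
Lemma ballR1 (x e y : R) : ball x e y -> Rabs (y - x) < e.
Proof. exact (fun h => h). Qed.
Lemma ballR2 (x e y : R) : Rabs (y - x) < e -> ball x e y.
Proof. exact (fun h => h). Qed.

Definition clamp (a b x : R) := Rmax a (Rmin b x).

Lemma clamp_in a b x : a <= b -> a <= clamp a b x <= b.
Proof. intros; unfold clamp, Rmax, Rmin; repeat destruct Rle_dec; lra. Qed.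

Lemma clamp_id a b x : a <= x <= b -> clamp a b x = x.
Proof. intros; unfold clamp, Rmax, Rmin; repeat destruct Rle_dec; lra. Qed.

Lemma clamp_lip a b x y : a <= b -> Rabs (clamp a b y - clamp a b x) <= Rabs (y - x).
Proof. intros; unfold clamp, Rmax, Rmin, Rabs; repeat destruct Rle_dec; repeat destruct Rcase_abs; lra. Qed.

Lemma within_cont_clamp (h : R -> R) a b : a <= b ->
  (forall x, Icc a b x -> filterlim h (within (Icc a b) (locally x)) (locally (h x))) ->
  forall x, continuity_pt (fun y => h (clamp a b y)) x.
Proof.
  intros Hab H x. apply continuity_pt_filterlim. apply filterlim_locally. intros eps.
  assert (Hc := clamp_in a b x Hab).
  specialize (H (clamp a b x) Hc). apply filterlim_locally with (eps := eps) in H.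
  destruct H as [d Hd]. exists d. intros y Hy. apply Hd.
  - apply ballR2. apply ballR1 in Hy. eapply Rle_lt_trans; [apply clamp_lip; lra|]. exact Hy.
  - apply clamp_in; lra.
Qed.

Lemma hdw_cont (D : R -> Prop) f x l : has_deriv_within D f x l ->
  filterlim f (within D (locally x)) (locally (f x)).
Proof.
  intros H. apply filterlim_locally. intros eps.
  apply filterlim_locally with (eps := mkposreal 1 Rlt_0_1) in H.
  destruct H as [d1 Hd1].
  assert (Hp : 0 < Rmin d1 (eps / (Rabs l + 1))).
  { apply Rmin_pos. apply cond_pos. apply Rdiv_lt_0_compat. apply cond_pos.
    pose proof (Rabs_pos l); lra. }
  exists (mkposreal _ Hp). intros y Hy HD. simpl in Hy. apply ballR1 in Hy.
  apply ballR2.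
  destruct (Req_dec y x) as [->|Hne].
  { rewrite Rminus_diag, Rabs_R0. apply cond_pos. }
  assert (Hb : ball x d1 y).
  { apply ballR2. eapply Rlt_le_trans; [exact Hy|apply Rmin_l]. }
  specialize (Hd1 y Hb (conj HD Hne)). apply ballR1 in Hd1. simpl in Hd1.
  assert (Hyx : y - x <> 0) by lra.
  replace (f y - f x) with (((f y - f x) / (y - x)) * (y - x)) by (field; exact Hyx).
  rewrite Rabs_mult.
  assert (Hq : Rabs ((f y - f x) / (y - x)) <= Rabs l + 1).
  { pose proof (Rabs_triang_inv ((f y - f x) / (y - x)) l). lra. }
  assert (Hy2 : Rabs (y - x) < eps / (Rabs l + 1)).
  { eapply Rlt_le_trans; [exact Hy|apply Rmin_r]. }
  pose proof (Rabs_pos l). pose proof (Rabs_pos (y - x)).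
  apply Rle_lt_trans with ((Rabs l + 1) * Rabs (y - x)).
  { apply Rmult_le_compat_r; lra. }
  replace (pos eps) with ((Rabs l + 1) * (eps / (Rabs l + 1))) by (field; lra).
  apply Rmult_lt_compat_l; lra.
Qed.

Lemma hdw_interior f Rr x l : 0 < x < Rr -> has_deriv_within (Icc 0 Rr) f x l ->
  is_derive f x l.
Proof.
  intros Hx H. apply is_derive_Reals. intros eps Heps.
  apply filterlim_locally with (eps := mkposreal eps Heps) in H.
  destruct H as [d1 Hd1].
  assert (Hp : 0 < Rmin d1 (Rmin x (Rr - x))).
  { apply Rmin_pos. apply cond_pos. apply Rmin_pos; lra. }
  exists (mkposreal _ Hp). intros h Hh0 Hh. simpl in Hh.
  assert (H1 := Rmin_l d1 (Rmin x (Rr - x))).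
  assert (H2 := Rmin_r d1 (Rmin x (Rr - x))).
  assert (H3 := Rmin_l x (Rr - x)). assert (H4 := Rmin_r x (Rr - x)).
  assert (Hb : ball x d1 (x + h)).
  { apply ballR2. replace (x + h - x) with h by ring. lra. }
  assert (HI : Icc 0 Rr (x + h) /\ x + h <> x).
  { unfold Icc. split; [|lra]. destruct (Rabs_def2 h _ Hh). lra. }
  specialize (Hd1 _ Hb HI). apply ballR1 in Hd1. simpl in Hd1.
  replace (x + h - x) with h in Hd1 by ring. exact Hd1.
Qed.

Lemma mvt_open (h h' : R -> R) a b : a < b ->
  (forall x, a < x < b -> is_derive h x (h' x)) ->
  (forall x, a <= x <= b -> continuity_pt h x) ->
  exists c, a < c < b /\ h b - h a = h' c * (b - a).
Proof.
  intros Hab Hd Hc.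
  assert (pr1 : forall c, a < c < b -> derivable_pt h c).
  { intros c Hc'. exists (h' c). apply is_derive_Reals. apply Hd. exact Hc'. }
  assert (pr2 : forall c, a < c < b -> derivable_pt id c).
  { intros. apply derivable_pt_id. }
  destruct (MVT h id a b pr1 pr2 Hab Hc) as [c [P HP]].
  { intros. apply derivable_continuous_pt. apply derivable_pt_id. }
  exists c. split; [exact P|].
  assert (E1 : derive_pt h c (pr1 c P) = h' c).
  { apply derive_pt_eq_0. apply is_derive_Reals. apply Hd. exact P. }
  assert (E2 : derive_pt id c (pr2 c P) = 1).
  { apply derive_pt_eq_0. apply derivable_pt_lim_id. }
  rewrite E1, E2 in HP. unfold id in HP. lra.
Qed.

Lemma mvt_cl (h h' : R -> R) lo hi a b : lo <= a -> a < b -> b <= hi ->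
  (forall x, a < x < b -> is_derive h x (h' x)) ->
  (forall x, continuity_pt (fun y => h (clamp lo hi y)) x) ->
  exists c, a < c < b /\ h b - h a = h' c * (b - a).
Proof.
  intros Hla Hab Hbh Hd Hc.
  destruct (mvt_open (fun y => h (clamp lo hi y)) h' a b Hab) as [c [Pc Hc']].
  - intros x Hx. apply is_derive_ext_loc with h; [|apply Hd; exact Hx].
    assert (Hp : 0 < Rmin (x - a) (b - x)) by (apply Rmin_pos; lra).
    exists (mkposreal _ Hp). intros y Hy. apply ballR1 in Hy. simpl in Hy.
    pose proof (Rmin_l (x - a) (b - x)). pose proof (Rmin_r (x - a) (b - x)).
    destruct (Rabs_def2 _ _ Hy). rewrite clamp_id; [reflexivity|lra].
  - intros; apply Hc.
  - exists c. split; [exact Pc|]. rewrite !clamp_id in Hc' by lra. exact Hc'.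
Qed.

Lemma cp_mult f g x : continuity_pt f x -> continuity_pt g x -> continuity_pt (fun y => f y * g y) x.
Proof. apply continuity_pt_mult. Qed.
Lemma cp_plus f g x : continuity_pt f x -> continuity_pt g x -> continuity_pt (fun y => f y + g y) x.
Proof. apply continuity_pt_plus. Qed.
Lemma cp_minus f g x : continuity_pt f x -> continuity_pt g x -> continuity_pt (fun y => f y - g y) x.
Proof. apply continuity_pt_minus. Qed.
Lemma exp_le_exp x y : x <= y -> exp x <= exp y.
Proof. intros [H|H]; [left; apply exp_increasing; exact H|subst; lra]. Qed.
Lemma exp_le_inv x y : exp x <= exp y -> x <= y.
Proof. intros H. destruct (Rle_dec x y); [assumption|].
  assert (exp y < exp x) by (apply exp_increasing; lra). lra. Qed.
Lemma cp_opp f x : continuity_pt f x -> continuity_pt (fun y => - f y) x.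
Proof. apply continuity_pt_opp. Qed.
Lemma cp_const c x : continuity_pt (fun _ => c) x.
Proof. apply continuity_pt_const. intros a b; reflexivity. Qed.
Lemma cp_id x : continuity_pt (fun y => y) x.
Proof. apply derivable_continuous_pt. apply derivable_pt_id. Qed.
Lemma cp_exp f x : continuity_pt f x -> continuity_pt (fun y => exp (f y)) x.
Proof. intros H. apply (continuity_pt_comp f exp x H). apply derivable_continuous_pt, derivable_pt_exp. Qed.
Lemma cp_pow f k x : continuity_pt f x -> continuity_pt (fun y => f y ^ k) x.
Proof. intros H. induction k as [|k IH]; simpl. apply cp_const. apply cp_mult; auto. Qed.
Lemma cp_clamp a b x : a <= b -> continuity_pt (clamp a b) x.
Proof.
  intros Hab. apply continuity_pt_filterlim. apply filterlim_locally. intros eps.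
  exists eps. intros y Hy. apply ballR2. apply ballR1 in Hy.
  eapply Rle_lt_trans; [apply clamp_lip; lra| exact Hy].
Qed.
Lemma cp_clampc (h : R -> R) a b x : a <= b -> (forall y, continuity_pt h y) ->
  continuity_pt (fun y => h (clamp a b y)) x.
Proof. intros Hab H. apply (continuity_pt_comp (clamp a b) h x); [apply cp_clamp; lra|apply H]. Qed.

Lemma max_deriv0 (U : R -> R) a b x0 l : a < x0 < b -> is_derive U x0 l ->
  (forall y, a < y < b -> U y <= U x0) -> l = 0.
Proof.
  intros Hx Hd Hm.
  assert (pr : derivable_pt U x0).
  { exists l. apply is_derive_Reals. exact Hd. }
  assert (E : derive_pt U x0 pr = l).
  { apply derive_pt_eq_0. apply is_derive_Reals. exact Hd. }
  rewrite <- E. apply (deriv_maximum U a b x0 pr); try lra. intros; apply Hm; lra.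
Qed.

Lemma sign_lemma (U dU V m w F : R -> R) Rr :
  0 < Rr ->
  (forall x, continuity_pt (fun y => U (clamp 0 Rr y)) x) ->
  (forall x, continuity_pt (fun y => dU (clamp 0 Rr y)) x) ->
  (forall x, continuity_pt (fun y => V (clamp 0 Rr y)) x) ->
  (forall x, continuity_pt (fun y => F (clamp 0 Rr y)) x) ->
  (forall x, 0 < x < Rr -> is_derive U x (dU x)) ->
  (forall x, 0 < x < Rr -> is_derive V x (w x * F x)) ->
  (forall x, 0 < x < Rr -> 0 < w x) ->
  (forall x, 0 < x <= Rr -> 0 < m x) ->
  (forall x, 0 <= x <= Rr -> V x = m x * dU x) ->
  V 0 = 0 -> dU Rr < 0 ->
  (forall x y, 0 <= x <= Rr -> 0 <= y <= Rr -> U x <= U y -> F x <= F y) ->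
  forall x, 0 <= x <= Rr -> F x <= 0.
Proof.
  intros HR HUc HdUc HVc HFc HUd HVd Hw Hm HVm HV0 HdUR HFm.
  destruct (continuity_ab_maj (fun y => U (clamp 0 Rr y)) 0 Rr) as [x0 [Hmax Hx0]];
    [lra| intros; apply HUc|].
  assert (Hmax' : forall c, 0 <= c <= Rr -> U c <= U x0).
  { intros c Hc. specialize (Hmax c Hc). simpl in Hmax.
    rewrite !clamp_id in Hmax by lra. exact Hmax. }
  assert (HF0 : F x0 <= 0).
  { destruct (Req_dec x0 Rr) as [Ex|Nx].
    - exfalso. subst x0.
      specialize (HdUc Rr). apply continuity_pt_filterlim in HdUc.
      assert (He : 0 < - dU Rr / 2) by lra.
      apply filterlim_locally with (eps := mkposreal _ He) in HdUc.
      destruct HdUc as [d Hd].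
      assert (Hdp := cond_pos d).
      set (y := Rr - Rmin d Rr / 2).
      assert (Hy1 := Rmin_l d Rr). assert (Hy2 := Rmin_r d Rr).
      assert (Hy3 : 0 < Rmin d Rr) by (apply Rmin_pos; lra).
      destruct (mvt_cl U dU 0 Rr y Rr) as [c [Hc Hc']]; try (unfold y; lra).
      { intros z Hz. apply HUd. unfold y in Hz. lra. }
      { exact HUc. }
      assert (Hb : ball Rr d c).
      { apply ballR2. rewrite Rabs_left by lra. unfold y in Hc. lra. }
      specialize (Hd c Hb). apply ballR1 in Hd. simpl in Hd.
      rewrite clamp_id in Hd by (unfold y in Hc; lra).
      rewrite clamp_id in Hd by lra.
      destruct (Rabs_def2 _ _ Hd).
      assert (U y <= U Rr) by (apply Hmax'; unfold y; lra).
      assert (dU c * (Rr - y) < 0) by (apply Rmult_neg_pos; unfold y in *; lra).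
      lra.
    - destruct (Rle_dec (F x0) 0) as [Hle|Hgt]; [exact Hle|exfalso].
      apply Rnot_le_gt in Hgt.
      assert (Hlt : x0 < Rr) by lra.
      assert (HVx0 : V x0 = 0).
      { destruct (Req_dec x0 0) as [->|Hx0n]; [exact HV0|].
        rewrite HVm by lra.
        rewrite (max_deriv0 U 0 Rr x0 (dU x0)); [ring|lra|apply HUd; lra|].
        intros; apply Hmax'; lra. }
      specialize (HFc x0). apply continuity_pt_filterlim in HFc.
      assert (He : 0 < F x0 / 2) by lra.
      apply filterlim_locally with (eps := mkposreal _ He) in HFc.
      destruct HFc as [d Hd].
      assert (Hdp := cond_pos d).
      assert (HFpos : forall c, x0 <= c < x0 + d -> c <= Rr -> 0 < F c).
      { intros c Hc Hc2. assert (Hb : ball x0 d c).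
        { apply ballR2. rewrite Rabs_right by lra. lra. }
        specialize (Hd c Hb). apply ballR1 in Hd. simpl in Hd.
        rewrite !clamp_id in Hd by lra. destruct (Rabs_def2 _ _ Hd). lra. }
      set (y1 := x0 + Rmin d (Rr - x0) / 2).
      assert (Hy1 := Rmin_l d (Rr - x0)). assert (Hy2 := Rmin_r d (Rr - x0)).
      assert (Hy3 : 0 < Rmin d (Rr - x0)) by (apply Rmin_pos; lra).
      assert (HdUpos : forall z, x0 < z <= y1 -> 0 < dU z).
      { intros z Hz.
        destruct (mvt_cl V (fun x => w x * F x) 0 Rr x0 z) as [c [Hc Hc']]; try (unfold y1 in *; lra).
        { intros t Ht. apply HVd. unfold y1 in *; lra. }
        { exact HVc. }
        assert (0 < w c) by (apply Hw; unfold y1 in *; lra).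
        assert (0 < F c) by (apply HFpos; unfold y1 in *; lra).
        assert (0 < w c * F c * (z - x0)) by (apply Rmult_lt_0_compat; [apply Rmult_lt_0_compat|]; lra).
        assert (0 < m z) by (apply Hm; unfold y1 in *; lra).
        rewrite HVm in Hc' by (unfold y1 in *; lra).
        destruct (Rle_dec (dU z) 0) as [Hn|Hp]; [|lra].
        assert (m z * dU z <= 0) by (apply Rmult_le_0_l; lra). lra. }
      destruct (mvt_cl U dU 0 Rr x0 y1) as [c [Hc Hc']]; try (unfold y1; lra).
      { intros z Hz. apply HUd. unfold y1 in *; lra. }
      { exact HUc. }
      assert (0 < dU c) by (apply HdUpos; lra).
      assert (0 < dU c * (y1 - x0)) by (apply Rmult_lt_0_compat; lra).
      assert (U y1 <= U x0) by (apply Hmax'; unfold y1; lra).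
      lra. }
  intros x Hx. eapply Rle_trans; [|exact HF0]. apply HFm; auto.
Qed.

Lemma mono_cl (h h' : R -> R) lo hi a b : lo <= a -> a <= b -> b <= hi ->
  (forall x, a < x < b -> is_derive h x (h' x)) ->
  (forall x, a < x < b -> h' x <= 0) ->
  (forall x, continuity_pt (fun y => h (clamp lo hi y)) x) -> h b <= h a.
Proof.
  intros H1 H2 H3 Hd Hn Hc. destruct (Req_dec a b) as [->|Hne]; [lra|].
  destruct (mvt_cl h h' lo hi a b) as [c [Hc1 Hc2]]; try lra; auto.
  assert (h' c * (b - a) <= 0) by (apply Rmult_le_0_r; [apply Hn; lra|lra]). lra.
Qed.

Lemma test_deriv (k r x : R) : is_derive (fun t => k * (t - r) ^ 2 / 2) x (k * (x - r)).
Proof. auto_derive; [auto|]. change (k * (1 * ((1 + 1) * ((x + - r) * 1))) * / 2 = k * (x - r))%R. field. Qed.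

Ltac cont := repeat first [apply cp_plus | apply cp_minus | apply cp_opp | apply cp_mult | apply cp_exp
  | apply cp_pow | apply cp_const | apply cp_id | apply cp_clamp; lra | assumption
  | match goal with H : forall x, continuity_pt ?f x |- continuity_pt ?f _ => apply H end ].

Lemma doubling (U dU V m w F : R -> R) Rr us r0 Mm w0 A q :
  0 < Rr ->
  (forall x, continuity_pt (fun y => U (clamp 0 Rr y)) x) ->
  (forall x, continuity_pt (fun y => V (clamp 0 Rr y)) x) ->
  (forall x, 0 < x < Rr -> is_derive U x (dU x)) ->
  (forall x, 0 < x < Rr -> is_derive V x (w x * F x)) ->
  (forall x, 0 < x < Rr -> V x = m x * dU x) ->
  (forall x, 0 < x < Rr -> 0 < m x <= Mm) ->
  (forall x, 0 <= x <= Rr -> V x <= 0) ->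
  (forall x, r0 <= x < Rr -> w0 <= w x) -> 0 < w0 ->
  (forall x, 0 <= x <= Rr -> F x <= - (A * q * (us - U x))) -> 0 < A -> 0 < q ->
  (forall x y, 0 <= x -> x <= y -> y <= Rr -> U y <= U x) ->
  (forall x, 0 <= x <= Rr -> U x <= us) ->
  0 < r0 -> forall r s, r0 <= r -> r < s -> s <= Rr ->
  (us - U r) * (1 + w0 * A * q / (2 * Mm) * (s - r) ^ 2) <= us - U s.
Proof.
  intros HR HUc HVc HUd HVd HVm Hm HV0 Hw Hw0 HF HA Hq HUdec Hus Hr0 r s Hr Hrs Hs.
  assert (HMm : 0 < Mm).
  { destruct (Hm ((r + s) / 2)) as [H1 H2]; lra. }
  set (Dr := us - U r).
  assert (HDr : 0 <= Dr) by (unfold Dr; assert (U r <= us) by (apply Hus; lra); lra).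
  set (k := w0 * A * q * Dr / Mm).
  assert (Hk : 0 <= k).
  { unfold k. apply Rmult_le_pos; [|apply Rlt_le, Rinv_0_lt_compat; lra].
    apply Rmult_le_pos; [|lra]. apply Rmult_le_pos; [|lra]. apply Rmult_le_pos; lra. }
  assert (Hclaim : forall t, r < t < s -> dU t + k * (t - r) <= 0).
  { intros t Ht.
    destruct (mvt_cl V (fun x => w x * F x) 0 Rr r t) as [c [Hc Hc']]; try lra.
    { intros z Hz. apply HVd. lra. }
    { exact HVc. }
    assert (Hwc : w0 <= w c) by (apply Hw; lra).
    assert (HFc : F c <= - (A * q * Dr)).
    { eapply Rle_trans; [apply HF; lra|]. unfold Dr.
      assert (U c <= U r) by (apply HUdec; lra).
      assert (A * q * (us - U r) <= A * q * (us - U c)).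
      { apply Rmult_le_compat_l; [|lra]. apply Rmult_le_pos; lra. }
      lra. }
    assert (HAqD : 0 <= A * q * Dr) by (apply Rmult_le_pos; [apply Rmult_le_pos|]; lra).
    assert (HwF : w c * F c <= - (w0 * (A * q * Dr))).
    { assert (w0 * (A * q * Dr) <= w c * (A * q * Dr)) by (apply Rmult_le_compat_r; lra).
      assert (w c * F c <= w c * (- (A * q * Dr))) by (apply Rmult_le_compat_l; lra).
      lra. }
    assert (HVr : V r <= 0) by (apply HV0; lra).
    assert (HVt : V t <= - (w0 * (A * q * Dr)) * (t - r)).
    { assert (w c * F c * (t - r) <= - (w0 * (A * q * Dr)) * (t - r))
        by (apply Rmult_le_compat_r; lra). lra. }
    destruct (Hm t) as [Hmt1 Hmt2]; [lra|].
    rewrite HVm in HVt by lra.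
    assert (E : w0 * (A * q * Dr) = k * Mm) by (unfold k; field; lra).
    rewrite E in HVt.
    assert (k * Mm * (t - r) >= k * m t * (t - r)).
    { apply Rle_ge. apply Rmult_le_compat_r; [lra|]. apply Rmult_le_compat_l; lra. }
    assert (m t * (dU t + k * (t - r)) <= 0) by nra.
    destruct (Rle_dec (dU t + k * (t - r)) 0); [assumption|].
    assert (0 < m t * (dU t + k * (t - r))) by (apply Rmult_lt_0_compat; lra). lra. }
  assert (Hmono := mono_cl (fun t => U t + k * (t - r) ^ 2 / 2) (fun t => dU t + k * (t - r))
     0 Rr r s).
  simpl in Hmono.
  assert (H := Hmono ltac:(lra) ltac:(lra) ltac:(lra)).
  clear Hmono.
  assert (H' : U s + k * ((s - r) * ((s - r) * 1)) / 2 <= U r + k * ((r - r) * ((r - r) * 1)) / 2).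
  { apply H.
    - intros x Hx. apply (is_derive_plus U (fun t => k * (t - r) ^ 2 / 2)).
      apply HUd; lra. apply test_deriv.
    - exact Hclaim.
    - intros x. cont. }
  replace (k * ((r - r) * ((r - r) * 1)) / 2) with 0 in H' by field.
  assert (E : Dr * (1 + w0 * A * q / (2 * Mm) * (s - r) ^ 2) =
     Dr + k * ((s - r) * ((s - r) * 1)) / 2) by (unfold k, Dr; simpl; field; lra).
  rewrite E.
  clearbody k. unfold Dr. lra.
Qed.

Lemma iterate (D : R -> R) c r0 Rr :
  (forall r s, r0 <= r -> r < s -> s <= Rr -> D r * (1 + c * (s - r) ^ 2) <= D s) ->
  0 <= c -> forall k h r1, 0 < h -> r0 <= r1 -> r1 + INR k * h <= Rr ->
  D r1 * (1 + c * h ^ 2) ^ k <= D (r1 + INR k * h).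
Proof.
  intros Hd Hc k. induction k as [|k IH]; intros h r1 Hh Hr1 Hk.
  - simpl. replace (r1 + 0 * h) with r1 by ring. lra.
  - rewrite S_INR in *. rewrite <- tech_pow_Rmult.
    assert (Hk0 : 0 <= INR k) by apply pos_INR.
    assert (H1 := IH h r1 Hh Hr1 ltac:(nra)).
    assert (H2 := Hd (r1 + INR k * h) (r1 + (INR k + 1) * h) ltac:(nra) ltac:(nra) Hk).
    replace (r1 + (INR k + 1) * h - (r1 + INR k * h)) with h in H2 by ring.
    assert (Hp : 0 <= 1 + c * h ^ 2) by (assert (0 <= c * h^2) by (apply Rmult_le_pos; [lra|apply pow2_ge_0]); lra).
    replace (D r1 * ((1 + c * h ^ 2) * (1 + c * h ^ 2) ^ k)) with
      ((D r1 * (1 + c * h ^ 2) ^ k) * (1 + c * h ^ 2)) by ring.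
    eapply Rle_trans; [|exact H2]. apply Rmult_le_compat_r; assumption.
Qed.

Lemma DR_bound (U dU V m w F : R -> R) Rr us t1 mmin w0 A q :
  0 < Rr ->
  (forall x, continuity_pt (fun y => U (clamp 0 Rr y)) x) ->
  (forall x, continuity_pt (fun y => V (clamp 0 Rr y)) x) ->
  (forall x, 0 < x < Rr -> is_derive U x (dU x)) ->
  (forall x, 0 < x < Rr -> is_derive V x (w x * F x)) ->
  (forall x, 0 < x < Rr -> V x = m x * dU x) ->
  (forall x, t1 <= x < Rr -> mmin <= m x) -> 0 < mmin ->
  (forall x y, 0 <= x -> x <= y -> y <= Rr -> V y <= V x) ->
  (forall x, 0 <= x <= Rr -> V x <= 0) ->
  (forall x, t1 <= x < Rr -> w0 <= w x) -> 0 < w0 ->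
  (forall x, 0 <= x <= Rr -> F x <= - (A * (exp (q * (us - U x)) - 1))) ->
  (forall x, 0 <= x <= Rr -> F x <= 0) ->
  0 < A -> 0 < q ->
  (forall x y, 0 <= x -> x <= y -> y <= Rr -> U y <= U x) ->
  0 < t1 < Rr ->
  (us - U Rr) - (us - U t1) <= (- V Rr / mmin) * (Rr - t1) /\
  w0 * A * (exp (q * (us - U t1)) - 1) * (Rr - t1) <= - V Rr.
Proof.
  intros HR HUc HVc HUd HVd HVm Hm Hmm HVdec HV0 Hw Hw0 HF HF0 HA Hq HUdec Ht1.
  assert (HVR : V Rr <= 0) by (apply HV0; lra).
  split.
  - set (K := - V Rr / mmin).
    assert (HK : 0 <= K) by (unfold K; apply Rmult_le_pos; [lra|apply Rlt_le, Rinv_0_lt_compat; lra]).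
    assert (H := mono_cl (fun t => - U t - K * t) (fun t => - dU t - K) 0 Rr t1 Rr
      ltac:(lra) ltac:(lra) ltac:(lra)).
    simpl in H.
    assert (H' : - U Rr - K * Rr <= - U t1 - K * t1).
    { apply H.
      - intros x Hx. apply (is_derive_minus (fun t => - U t) (fun t => K * t)).
        apply (is_derive_opp U). apply HUd; lra.
        auto_derive; [auto|]. change (K * 1 = K)%R. ring.
      - intros x Hx. destruct (Rle_dec (- dU x - K) 0) as [Hle|Hgt]; [exact Hle|exfalso].
        assert (Hmx : mmin <= m x) by (apply Hm; lra).
        assert (HVx : V Rr <= V x) by (apply HVdec; lra).
        rewrite (HVm x) in HVx by lra.
        assert (E : K * mmin = - V Rr) by (unfold K; field; lra).
        assert (0 < m x * (- dU x - K)) by (apply Rmult_lt_0_compat; lra).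
        assert (K * mmin <= K * m x) by (apply Rmult_le_compat_l; lra).
        nra.
      - intros x. cont. }
    lra.
  - destruct (mvt_cl V (fun x => w x * F x) 0 Rr t1 Rr) as [c [Hc Hc']]; try lra.
    { intros z Hz. apply HVd. lra. }
    { exact HVc. }
    assert (Hwc : w0 <= w c) by (apply Hw; lra).
    assert (HFc0 : F c <= 0) by (apply HF0; lra).
    assert (HE : exp (q * (us - U t1)) <= exp (q * (us - U c))).
    { apply exp_le_exp. assert (U c <= U t1) by (apply HUdec; lra).
      apply Rmult_le_compat_l; lra. }
    assert (HFc : F c <= - (A * (exp (q * (us - U t1)) - 1))).
    { eapply Rle_trans; [apply HF; lra|].
      assert (A * (exp (q * (us - U t1)) - 1) <= A * (exp (q * (us - U c)) - 1))
        by (apply Rmult_le_compat_l; lra). lra. }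
    assert (w c * F c <= w0 * F c) by nra.
    assert (w0 * F c <= w0 * (- (A * (exp (q * (us - U t1)) - 1)))) by (apply Rmult_le_compat_l; lra).
    assert (HVt1 : V t1 <= 0) by (apply HV0; lra).
    assert (w c * F c * (Rr - t1) <= w0 * (- (A * (exp (q * (us - U t1)) - 1))) * (Rr - t1))
      by (apply Rmult_le_compat_r; lra).
    lra.
Qed.

Lemma ex_RInt_cp f a b : (forall x, continuity_pt f x) -> ex_RInt f a b.
Proof. intros H. apply (ex_RInt_continuous (V := R_CompleteNormedModule)). intros z _. apply continuity_pt_filterlim, H. Qed.

Lemma is_RInt_pow k Rr : is_RInt (fun s => s ^ k) 0 Rr (Rr ^ S k / INR (S k)).
Proof.
  assert (H := is_RInt_derive (fun s => s ^ S k / INR (S k)) (fun s => s ^ k) 0 Rr).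
  replace (Rr ^ S k / INR (S k)) with (minus (Rr ^ S k / INR (S k)) (0 ^ S k / INR (S k))).
  2: { change (Rr ^ S k / INR (S k) - 0 ^ S k / INR (S k) = Rr ^ S k / INR (S k)).
       replace (0 ^ S k) with 0 by (simpl; ring). unfold Rdiv. ring. }
  assert (HN : INR (S k) <> 0) by (apply not_0_INR; lia).
  apply H.
  - intros x _. auto_derive; [exact I|]. change (1 * (INR (S k) * x ^ k) * / INR (S k) = x ^ k)%R. field. exact HN.
  - intros x _. apply continuity_pt_filterlim. cont.
Qed.

Lemma is_RInt_wU k Uh Rr : (forall x, continuity_pt Uh x) ->
  RInt (fun s => s ^ k * Uh s) 0 Rr = 0 -> is_RInt (fun s => s ^ k * Uh s) 0 Rr 0.
Proof.
  intros Hc E.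
  assert (H := RInt_correct (V := R_CompleteNormedModule) (fun s => s ^ k * Uh s) 0 Rr).
  rewrite E in H. apply H. apply ex_RInt_cp. intros x. cont.
Qed.

Lemma int_lower k Uh Rr c : 0 < Rr -> (forall x, continuity_pt Uh x) ->
  RInt (fun s => s ^ k * Uh s) 0 Rr = 0 ->
  Rr ^ S k / INR (S k) <= RInt (fun s => s ^ k * exp (c * Uh s)) 0 Rr.
Proof.
  intros HR Hc E.
  assert (Hw := is_RInt_pow k Rr).
  assert (HU := is_RInt_wU k Uh Rr Hc E).
  assert (H1 := is_RInt_plus _ _ _ _ _ _ Hw (is_RInt_scal _ _ _ c _ HU)).
  assert (H2 : is_RInt (fun y => y ^ k + c * (y ^ k * Uh y)) 0 Rr (Rr ^ S k / INR (S k) + c * 0)).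
  { eapply is_RInt_ext; [|exact H1]. intros; reflexivity. }
  apply Rle_trans with (RInt (fun y => y ^ k + c * (y ^ k * Uh y)) 0 Rr).
  - rewrite (is_RInt_unique _ _ _ _ H2). lra.
  - apply RInt_le; [lra| eexists; exact H2 | apply ex_RInt_cp; intros x; cont |].
    intros x Hx.
    assert (H4 := exp_ineq1_le (c * Uh x)).
    assert (H3 : 0 <= x ^ k) by (apply pow_le; lra). nra.
Qed.

Lemma int_upper k Uh Rr c us : 0 < Rr -> (forall x, continuity_pt Uh x) -> 0 <= c ->
  (forall x, 0 <= x <= Rr -> Uh x <= us) ->
  RInt (fun s => s ^ k * exp (c * Uh s)) 0 Rr <= exp (c * us) * (Rr ^ S k / INR (S k)).
Proof.
  intros HR Hc Hc0 Hu.
  assert (Hw := is_RInt_pow k Rr).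
  assert (H0 := is_RInt_scal _ _ _ (exp (c * us)) _ Hw).
  assert (H1 : is_RInt (fun y => exp (c * us) * y ^ k) 0 Rr (exp (c * us) * (Rr ^ S k / INR (S k)))).
  { eapply is_RInt_ext; [|exact H0]. intros; reflexivity. }
  apply Rle_trans with (RInt (fun y => exp (c * us) * y ^ k) 0 Rr).
  - apply RInt_le; [lra| apply ex_RInt_cp; intros x; cont | eexists; exact H1 |].
    intros x Hx.
    assert (H2 : exp (c * Uh x) <= exp (c * us)).
    { apply exp_le_exp. apply Rmult_le_compat_l; [lra|apply Hu; lra]. }
    assert (H3 : 0 <= x ^ k) by (apply pow_le; lra). nra.
  - rewrite (is_RInt_unique _ _ _ _ H1). right. reflexivity.
Qed.

Lemma int_D k Uh Rr us a : 0 < a < Rr -> (forall x, continuity_pt Uh x) ->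
  RInt (fun s => s ^ k * Uh s) 0 Rr = 0 ->
  (forall x, 0 <= x <= Rr -> Uh x <= us) ->
  (forall x y, 0 <= x -> x <= y -> y <= Rr -> Uh y <= Uh x) ->
  us * (Rr ^ S k / INR (S k)) <= Rr ^ k * (a * (us - Uh a) + (Rr - a) * (us - Uh Rr)).
Proof.
  intros Ha Hc E Hu Hd.
  assert (Hw := is_RInt_pow k Rr).
  assert (HU := is_RInt_wU k Uh Rr Hc E).
  assert (H1 := is_RInt_minus _ _ _ _ _ _ (is_RInt_scal _ _ _ us _ Hw) HU).
  set (f := fun y => us * y ^ k - y ^ k * Uh y).
  assert (Hf : is_RInt f 0 Rr (us * (Rr ^ S k / INR (S k)))).
  { replace (us * (Rr ^ S k / INR (S k))) with (minus (scal us (Rr ^ S k / INR (S k))) (0:R)).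
    2: { change (us * (Rr ^ S k / INR (S k)) - 0 = us * (Rr ^ S k / INR (S k))). ring. }
    eapply is_RInt_ext; [|exact H1]. intros x _. reflexivity. }
  rewrite <- (is_RInt_unique _ _ _ _ Hf).
  assert (Hex : forall b c, ex_RInt f b c) by (intros; apply ex_RInt_cp; intros; unfold f; cont).
  rewrite <- (RInt_Chasles f 0 a Rr (Hex _ _) (Hex _ _)).
  change (RInt f 0 a + RInt f a Rr <= Rr ^ k * (a * (us - Uh a) + (Rr - a) * (us - Uh Rr))).
  assert (HRk : forall x, 0 <= x <= Rr -> 0 <= x ^ k <= Rr ^ k).
  { intros x Hx. split; [apply pow_le; lra|apply pow_incr; lra]. }
  assert (I1 : RInt f 0 a <= RInt (fun _ => Rr ^ k * (us - Uh a)) 0 a).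
  { apply RInt_le; [lra|apply Hex|apply ex_RInt_cp; intros; cont|].
    intros x Hx. unfold f. destruct (HRk x) as [H2 H3]; [lra|].
    assert (Uh a <= Uh x) by (apply Hd; lra). assert (Uh x <= us) by (apply Hu; lra).
    assert (0 <= us - Uh x) by lra.
    replace (us * x ^ k - x ^ k * Uh x) with (x ^ k * (us - Uh x)) by ring.
    apply Rmult_le_compat; lra. }
  assert (I2 : RInt f a Rr <= RInt (fun _ => Rr ^ k * (us - Uh Rr)) a Rr).
  { apply RInt_le; [lra|apply Hex|apply ex_RInt_cp; intros; cont|].
    intros x Hx. unfold f. destruct (HRk x) as [H2 H3]; [lra|].
    assert (Uh Rr <= Uh x) by (apply Hd; lra). assert (Uh x <= us) by (apply Hu; lra).
    assert (0 <= us - Uh x) by lra.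
    replace (us * x ^ k - x ^ k * Uh x) with (x ^ k * (us - Uh x)) by ring.
    apply Rmult_le_compat; lra. }
  rewrite RInt_const in I1, I2. change (scal (a - 0) (Rr ^ k * (us - Uh a))) with ((a - 0) * (Rr ^ k * (us - Uh a))) in I1.
  change (scal (Rr - a) (Rr ^ k * (us - Uh Rr))) with ((Rr - a) * (Rr ^ k * (us - Uh Rr))) in I2.
  nra.
Qed.

Lemma us_identity lam mu p q u : 0 < lam -> 0 < mu -> 0 < p -> 0 < q ->
  lam * exp (p * u) - mu * exp (- (q * u)) =
  - (lam * exp (p * (ln (mu / lam) / (p + q)))) *
    (exp (q * (ln (mu / lam) / (p + q) - u)) - exp (- (p * (ln (mu / lam) / (p + q) - u)))).
Proof.
  intros Hl Hm Hp Hq. set (us := ln (mu / lam) / (p + q)).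
  assert (E1 : exp (p * us) * exp (q * (us - u)) = mu / lam * exp (- (q * u))).
  { rewrite <- exp_plus. replace (p * us + q * (us - u)) with (ln (mu / lam) + - (q * u)).
    rewrite exp_plus, exp_ln. reflexivity. apply Rdiv_lt_0_compat; lra.
    unfold us. field. lra. }
  assert (E2 : exp (p * us) * exp (- (p * (us - u))) = exp (p * u)).
  { rewrite <- exp_plus. f_equal. ring. }
  replace (- (lam * exp (p * us)) * (exp (q * (us - u)) - exp (- (p * (us - u)))))
    with (- lam * (exp (p * us) * exp (q * (us - u))) + lam * (exp (p * us) * exp (- (p * (us - u)))))
    by ring.
  rewrite E1, E2. field. lra.
Qed.

Lemma deriv_V n (g dU : R -> R) x g' u'' : is_derive g x g' -> is_derive dU x u'' ->
  is_derive (fun y => y ^ S n * g y * dU y) x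
    (INR (S n) * x ^ n * g x * dU x + x ^ S n * g' * dU x + x ^ S n * g x * u'').
Proof.
  intros Hg Hd.
  assert (Hp : is_derive (fun y => y ^ S n) x (INR (S n) * x ^ n)).
  { auto_derive; [exact I|]. change (1 * (INR (S n) * x ^ n) = INR (S n) * x ^ n)%R. ring. }
  assert (H1 := is_derive_mult _ _ _ _ _ Hp Hg ltac:(intros; apply Rmult_comm)).
  assert (H2 := is_derive_mult _ _ _ _ _ H1 Hd ltac:(intros; apply Rmult_comm)).
  replace (INR (S n) * x ^ n * g x * dU x + x ^ S n * g' * dU x + x ^ S n * g x * u'') with
    (plus (mult (plus (mult (INR (S n) * x ^ n) (g x)) (mult (x ^ S n) g')) (dU x))
       (mult (mult (x ^ S n) (g x)) u'')).
  - eapply is_derive_ext; [|exact H2]. intros; reflexivity.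
  - change ((INR (S n) * x ^ n * g x + x ^ S n * g') * dU x + x ^ S n * g x * u'' =
      INR (S n) * x ^ n * g x * dU x + x ^ S n * g' * dU x + x ^ S n * g x * u'')%R. ring.
Qed.

Lemma exp_pow_nat x m : exp x ^ m = exp (INR m * x).
Proof.
  induction m as [|m IH]. simpl. rewrite Rmult_0_l, exp_0. reflexivity.
  rewrite <- tech_pow_Rmult, IH, S_INR, <- exp_plus. f_equal. ring.
Qed.

Definition Om n Rr := Rr ^ S (S n) / INR (S (S n)).
Definition Mm n Rr gmax := Rr ^ S n * gmax.
Definition mmin n Rr gmin := (Rr / 2) ^ S n * gmin.
Definition Mass n Rr A B := (B - A) * Om n Rr.
Definition c0 n Rr A q gmax := (Rr / 2) ^ S n * A * q / (2 * Mm n Rr gmax).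
Definition C8 n Rr A B gmin := Mass n Rr A B ^ 2 / ((Rr / 2) ^ S n * A * mmin n Rr gmin).
Definition C10 n Rr A B q gmin := 1 + ln (1 + C8 n Rr A B gmin) / q + 2 / q.
Definition Pk n Rr A q gmax kk := (INR kk ^ 2 / c0 n Rr A q gmax) ^ kk.
Definition C13 n Rr A B q gmin gmax kk :=
  Rr ^ S n * (Rr * Pk n Rr A q gmax kk + 1) * C10 n Rr A B q gmin / Om n Rr.
Definition Cf n Rr A B p q gmin gmax kk kappa :=
  (Om n Rr * p * exp (p * (C13 n Rr A B q gmin gmax kk / kappa)) + B / A * Om n Rr * (p + q))
  * C13 n Rr A B q gmin gmax kk.

Lemma per_eps n Rr A B p q (g : R -> R) gmin gmax kappa (kk : nat) eps (U : R -> R) :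
  0 < Rr -> 0 < A -> A < B -> 0 < p -> 0 < q -> 0 < kappa < 1 ->
  (forall x, 0 <= x <= Rr -> gmin <= g x <= gmax) -> 0 < gmin ->
  (forall x, 0 <= x <= Rr -> is_derive g x (Derive g x)) ->
  (forall x, continuity_pt (fun y => g (clamp 0 Rr y)) x) ->
  (1 <= kk)%nat -> kappa <= INR kk * (2 - 2 * kappa) ->
  0 < eps -> eps <= exp (-1) -> eps <= Rr * Mass n Rr A B / (2 * mmin n Rr gmin) ->
  exp (kappa * ln eps) <= Rr / 2 ->
  solves_Nstar (S (S n)) Rr A B p q g eps U ->
  Rabs (Ip (S (S n)) Rr p U - Rr ^ (S (S n)) / INR (S (S n)))
  + Rabs (Iq (S (S n)) Rr q U - B * Rr ^ (S (S n)) / (A * INR (S (S n))))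
  <= Cf n Rr A B p q gmin gmax kk kappa * Rpower eps kappa * ln (1 / eps).
Proof.
  intros HR HA HAB Hp Hq Hk Hg Hgmin Hgd Hgc Hkk Hkk2 He He1 He2 He3 Hsol.
  destruct Hsol as [[dU [[HdU HdUc] [HdU0 HdUR]]] [Hsm [Hode HUint]]].
  assert (HUc : forall x, continuity_pt (fun y => U (clamp 0 Rr y)) x).
  { apply within_cont_clamp; [lra|]. intros x Hx. eapply hdw_cont. apply HdU; exact Hx. }
  assert (HdUc' : forall x, continuity_pt (fun y => dU (clamp 0 Rr y)) x).
  { apply within_cont_clamp; [lra|]. intros x Hx. apply HdUc; exact Hx. }
  assert (HUd : forall x, 0 < x < Rr -> is_derive U x (dU x)).
  { intros x Hx. eapply hdw_interior; [exact Hx|]. apply HdU. unfold Icc; lra. }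
  assert (HDU : forall x, 0 < x < Rr -> Derive U x = dU x).
  { intros x Hx. apply is_derive_unique, HUd, Hx. }
  assert (HdUd : forall x, 0 < x < Rr -> is_derive dU x (Derive_n U 2 x)).
  { intros x Hx. assert (H2 := Hsm 2%nat x Hx). simpl in H2.
    assert (H3 := Derive_correct _ _ H2).
    eapply is_derive_ext_loc; [|exact H3].
    assert (Hp0 : 0 < Rmin (x - 0) (Rr - x)) by (apply Rmin_pos; lra).
    exists (mkposreal _ Hp0). intros y Hy. apply ballR1 in Hy. simpl in Hy.
    pose proof (Rmin_l (x - 0) (Rr - x)). pose proof (Rmin_r (x - 0) (Rr - x)).
    destruct (Rabs_def2 _ _ Hy). apply HDU. lra. }
  set (Uh := fun y => U (clamp 0 Rr y)).
  assert (HUh : forall x, 0 <= x <= Rr -> Uh x = U x).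
  { intros x Hx. unfold Uh. rewrite clamp_id; auto. }
  assert (HIext : forall (G : R -> R -> R), RInt (fun s => G s (U s)) 0 Rr = RInt (fun s => G s (Uh s)) 0 Rr).
  { intros G. apply RInt_ext. intros x Hx. rewrite Rmin_left, Rmax_right in Hx by lra.
    rewrite HUh by lra. reflexivity. }
  set (IP := Ip (S (S n)) Rr p U). set (IQ := Iq (S (S n)) Rr q U).
  assert (EIp : IP = RInt (fun s => s ^ S n * exp (p * Uh s)) 0 Rr).
  { unfold IP, Ip. change (S (S n) - 1)%nat with (S n).
    exact (HIext (fun s u => s ^ S n * exp (p * u))). }
  assert (EIq : IQ = RInt (fun s => s ^ S n * exp ((- q) * Uh s)) 0 Rr).
  { unfold IQ, Iq. change (S (S n) - 1)%nat with (S n).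
    rewrite (HIext (fun s u => s ^ S n * exp (- (q * u)))). apply RInt_ext.
    intros x _. f_equal. f_equal. ring. }
  assert (HUint' : RInt (fun s => s ^ S n * Uh s) 0 Rr = 0).
  { change (S (S n) - 1)%nat with (S n) in HUint.
    etransitivity; [symmetry; exact (HIext (fun s u => s ^ S n * u))|exact HUint]. }
  set (Om' := Om n Rr).
  assert (HOm : 0 < Om').
  { unfold Om', Om. apply Rdiv_lt_0_compat. apply pow_lt; lra. apply lt_0_INR; lia. }
  assert (HIPl : Om' <= IP).
  { rewrite EIp. unfold Om', Om. apply int_lower; auto. }
  assert (HIQl : Om' <= IQ).
  { rewrite EIq. unfold Om', Om. apply int_lower; auto. }
  set (lam := Om' * A / IP). set (mu := Om' * B / IQ).
  assert (Hlam : 0 < lam) by (unfold lam; apply Rdiv_lt_0_compat; [apply Rmult_lt_0_compat|]; lra).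
  assert (Hmu : 0 < mu) by (unfold mu; apply Rdiv_lt_0_compat; [apply Rmult_lt_0_compat|]; lra).
  set (F := fun x => lam * exp (p * U x) - mu * exp (- (q * U x))).
  assert (HRHS : forall x, Rr ^ S (S n) / INR (S (S n)) *
      (A * exp (p * U x) / IP - B * exp (- (q * U x)) / IQ) = F x).
  { intros x. unfold F, lam, mu, Om', Om. field. repeat split; try lra.
    apply not_0_INR; lia. }
  set (V := fun x => x ^ S n * g x * dU x).
  set (w := fun x => x ^ S n / eps ^ 2).
  set (m := fun x => x ^ S n * g x).
  assert (HVd : forall x, 0 < x < Rr -> is_derive V x (w x * F x)).
  { intros x Hx.
    assert (H := deriv_V n g dU x (Derive g x) (Derive_n U 2 x) (Hgd x ltac:(lra)) (HdUd x Hx)).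
    assert (HO := Hode x Hx). fold IP IQ in HO. rewrite HRHS, HDU in HO by lra.
    rewrite <- HO. unfold V. eapply is_derive_ext; [|refine (eq_ind _ _ H _ _)].
    - intros; reflexivity.
    - assert (Hgx : 0 < g x) by (destruct (Hg x); lra).
      unfold w. match goal with |- ?a = ?b => change (@eq R a b) end. rewrite (S_INR (S n)). rewrite <- !tech_pow_Rmult. field. repeat split; lra. }
  assert (HVc : forall x, continuity_pt (fun y => V (clamp 0 Rr y)) x).
  { intros x. unfold V. cont. }
  assert (HFc : forall x, continuity_pt (fun y => F (clamp 0 Rr y)) x).
  { intros x. unfold F. cont. }
  assert (Hwp : forall x, 0 < x -> 0 < w x).
  { intros x Hx. unfold w. apply Rdiv_lt_0_compat. apply pow_lt; lra. apply pow_lt; lra. }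
  assert (Hmp : forall x, 0 < x <= Rr -> 0 < m x).
  { intros x Hx. unfold m. apply Rmult_lt_0_compat. apply pow_lt; lra. destruct (Hg x); lra. }
  assert (HV0 : V 0 = 0) by (unfold V; simpl; ring).
  assert (HdURn : dU Rr < 0).
  { rewrite HdUR. unfold Rdiv. apply Rmult_neg_pos. nra.
    apply Rinv_0_lt_compat. apply Rmult_lt_0_compat. apply Rmult_lt_0_compat.
    apply pow_lt; lra. apply lt_0_INR; lia. destruct (Hg Rr); lra. }
  assert (HFmono : forall x y, 0 <= x <= Rr -> 0 <= y <= Rr -> U x <= U y -> F x <= F y).
  { intros x y _ _ Hxy. unfold F.
    assert (exp (p * U x) <= exp (p * U y)) by (apply exp_le_exp; nra).
    assert (exp (- (q * U y)) <= exp (- (q * U x))) by (apply exp_le_exp; nra).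
    nra. }
  assert (HFneg := sign_lemma U dU V m w F Rr HR HUc HdUc' HVc HFc HUd HVd
     ltac:(intros; apply Hwp; lra) Hmp ltac:(intros; reflexivity) HV0 HdURn HFmono).
  assert (HVdec : forall x y, 0 <= x -> x <= y -> y <= Rr -> V y <= V x).
  { intros x y H1 H2 H3. apply (mono_cl V (fun t => w t * F t) 0 Rr x y); auto.
    intros t Ht. apply HVd; lra.
    intros t Ht. assert (0 < w t) by (apply Hwp; lra). assert (F t <= 0) by (apply HFneg; lra). nra. }
  assert (HVle : forall x, 0 <= x <= Rr -> V x <= 0).
  { intros x Hx. rewrite <- HV0. apply HVdec; lra. }
  assert (HdUle : forall x, 0 < x < Rr -> dU x <= 0).
  { intros x Hx. assert (H1 := HVle x ltac:(lra)). assert (H2 := Hmp x ltac:(lra)).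
    unfold V in H1. fold (m x) in H1. destruct (Rle_dec (dU x) 0); [auto|].
    assert (0 < m x * dU x) by (apply Rmult_lt_0_compat; lra). unfold m in *. lra. }
  assert (HUdec : forall x y, 0 <= x -> x <= y -> y <= Rr -> U y <= U x).
  { intros x y H1 H2 H3. apply (mono_cl U dU 0 Rr x y); auto.
    intros t Ht. apply HUd; lra. intros t Ht. apply HdUle; lra. }
  set (us := ln (mu / lam) / (p + q)).
  set (k0 := lam * exp (p * us)).
  assert (Hk0p : 0 < k0) by (unfold k0; apply Rmult_lt_0_compat; [lra|apply exp_pos]).
  assert (HFid : forall x, F x = - k0 * (exp (q * (us - U x)) - exp (- (p * (us - U x))))).
  { intros x. unfold F, k0, us. apply us_identity; lra. }
  assert (HUus : forall x, 0 <= x <= Rr -> U x <= us).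
  { intros x Hx. assert (H1 := HFneg x Hx). rewrite HFid in H1.
    assert (H2 : exp (- (p * (us - U x))) <= exp (q * (us - U x))).
    { destruct (Rle_dec (exp (- (p * (us - U x)))) (exp (q * (us - U x)))); [auto|].
      assert (0 < k0 * (exp (- (p * (us - U x))) - exp (q * (us - U x)))) by (apply Rmult_lt_0_compat; lra).
      lra. }
    apply exp_le_inv in H2. nra. }
  assert (HUhus : forall x, 0 <= x <= Rr -> Uh x <= us).
  { intros x Hx. unfold Uh. apply HUus. apply clamp_in. lra. }
  assert (HIPu : IP <= exp (p * us) * Om').
  { rewrite EIp. unfold Om', Om. apply int_upper; auto; lra. }
  assert (Hk0 : A <= k0).
  { assert (HIPp : 0 < IP) by lra.
    assert (E : k0 * IP = Om' * A * exp (p * us)) by (unfold k0, lam; field; lra).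
    assert (A * IP <= k0 * IP).
    { rewrite E. assert (0 <= A) by lra.
      replace (Om' * A * exp (p * us)) with (A * (exp (p * us) * Om')) by ring.
      apply Rmult_le_compat_l; lra. }
    apply Rmult_le_reg_r with IP; lra. }
  assert (HF1 : forall x, 0 <= x <= Rr -> F x <= - (A * q * (us - U x))).
  { intros x Hx. rewrite HFid. assert (HD : 0 <= us - U x) by (assert (U x <= us) by (apply HUus; lra); lra).
    assert (H1 := exp_ineq1_le (q * (us - U x))).
    assert (H2 : exp (- (p * (us - U x))) <= 1) by (rewrite <- exp_0; apply exp_le_exp; nra).
    assert (H3 : 0 <= q * (us - U x)) by nra.
    assert (H4 : A * (q * (us - U x)) <= k0 * (exp (q * (us - U x)) - exp (- (p * (us - U x))))).
    { apply Rle_trans with (k0 * (q * (us - U x))). apply Rmult_le_compat_r; lra.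
      apply Rmult_le_compat_l; lra. }
    nra. }
  assert (HF2 : forall x, 0 <= x <= Rr -> F x <= - (A * (exp (q * (us - U x)) - 1))).
  { intros x Hx. rewrite HFid. assert (HD : 0 <= us - U x) by (assert (U x <= us) by (apply HUus; lra); lra).
    assert (H1 := exp_ineq1_le (q * (us - U x))).
    assert (H2 : exp (- (p * (us - U x))) <= 1) by (rewrite <- exp_0; apply exp_le_exp; nra).
    assert (H3 : 0 <= q * (us - U x)) by nra.
    assert (H4 : A * (exp (q * (us - U x)) - 1) <= k0 * (exp (q * (us - U x)) - exp (- (p * (us - U x))))).
    { apply Rle_trans with (k0 * (exp (q * (us - U x)) - 1)). apply Rmult_le_compat_r; lra.
      apply Rmult_le_compat_l; lra. }
    nra. }
  set (D := fun x => us - U x).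
  assert (HD0 : forall x, 0 <= x <= Rr -> 0 <= D x) by (intros x Hx; unfold D; assert (U x <= us) by (apply HUus; lra); lra).
  set (MmV := Mm n Rr gmax). set (mminV := mmin n Rr gmin). set (MassV := Mass n Rr A B).
  assert (HMass : 0 < MassV) by (unfold MassV, Mass; fold (Om n Rr); fold Om'; nra).
  assert (Hh2 : 0 < (Rr / 2) ^ S n) by (apply pow_lt; lra).
  assert (Hmmin : 0 < mminV) by (unfold mminV, mmin; nra).
  assert (He1' : eps < 1) by (assert (exp (-1) < exp 0) by (apply exp_increasing; lra); rewrite exp_0 in *; lra).
  set (w0 := (Rr / 2) ^ S n / eps ^ 2).
  assert (Hw0 : 0 < w0) by (unfold w0; apply Rdiv_lt_0_compat; [lra|apply pow_lt; lra]).
  set (tau := eps ^ 2 * mminV / MassV).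
  assert (Htau : 0 < tau) by (unfold tau; apply Rdiv_lt_0_compat; [|lra]; apply Rmult_lt_0_compat; [apply pow_lt|]; lra).
  assert (Htau2 : tau <= Rr / 2).
  { unfold tau. apply Rle_trans with (eps * mminV / MassV).
    - unfold Rdiv. apply Rmult_le_compat_r; [apply Rlt_le, Rinv_0_lt_compat; lra|].
      apply Rmult_le_compat_r; [lra|]. simpl. nra.
    - fold mminV MassV in He2.
      apply Rle_trans with (Rr * MassV / (2 * mminV) * mminV / MassV).
      + unfold Rdiv. apply Rmult_le_compat_r; [apply Rlt_le, Rinv_0_lt_compat; lra|].
        apply Rmult_le_compat_r; lra.
      + right. field. lra. }
  assert (HmR2 : forall x, Rr / 2 <= x <= Rr -> mminV <= m x).
  { intros x Hx. unfold mminV, mmin, m. apply Rmult_le_compat; try lra.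
    apply pow_incr; lra. destruct (Hg x); lra. }
  assert (HwR2 : forall x, Rr / 2 <= x -> w0 <= w x).
  { intros x Hx. unfold w0, w. unfold Rdiv. apply Rmult_le_compat_r.
    apply Rlt_le, Rinv_0_lt_compat, pow_lt; lra. apply pow_incr; lra. }
  assert (HVR : - V Rr = MassV / eps ^ 2).
  { unfold V. rewrite HdUR. unfold MassV, Mass, Om. assert (0 < g Rr) by (destruct (Hg Rr); lra).
    rewrite <- (tech_pow_Rmult Rr (S n)). field. repeat split; try lra. apply not_0_INR; lia. }
  destruct (DR_bound U dU V m w F Rr us (Rr - tau) mminV w0 A q HR HUc HVc HUd HVd
     ltac:(intros; reflexivity) ltac:(intros; apply HmR2; lra) Hmmin HVdec HVle
     ltac:(intros; apply HwR2; lra) Hw0 HF2 HFneg HA Hq HUdec ltac:(lra)) as [D1 D2].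
  fold (D Rr) (D (Rr - tau)) in D1, D2.
  assert (D1' : D Rr <= D (Rr - tau) + 1).
  { replace (- V Rr / mminV * (Rr - (Rr - tau))) with 1 in D1. lra.
    rewrite HVR. unfold tau. field. repeat split; lra. }
  assert (D2' : exp (q * D (Rr - tau)) <= (1 + C8 n Rr A B gmin) / eps ^ 2).
  { rewrite HVR in D2. replace (Rr - (Rr - tau)) with tau in D2 by ring.
    assert (Hc : w0 * A * tau = (Rr / 2) ^ S n * A * mminV / MassV).
    { unfold w0, tau. field. split; lra. }
    assert (Hc8 : C8 n Rr A B gmin = MassV ^ 2 / ((Rr / 2) ^ S n * A * mminV)) by reflexivity.
    assert (Hpos : 0 < (Rr / 2) ^ S n * A * mminV / MassV).
    { apply Rdiv_lt_0_compat; [|lra]. apply Rmult_lt_0_compat; [apply Rmult_lt_0_compat|]; lra. }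
    assert (H1 : exp (q * D (Rr - tau)) - 1 <= C8 n Rr A B gmin / eps ^ 2).
    { rewrite Hc8. apply Rmult_le_reg_l with ((Rr / 2) ^ S n * A * mminV / MassV); [lra|].
      replace ((Rr / 2) ^ S n * A * mminV / MassV * (MassV ^ 2 / ((Rr / 2) ^ S n * A * mminV) / eps ^ 2))
        with (MassV / eps ^ 2) by (field; repeat split; lra).
      rewrite <- Hc. lra. }
    assert (Heps2 : 0 < eps ^ 2) by (apply pow_lt; lra).
    assert (eps ^ 2 <= 1) by (simpl; nra).
    assert (1 <= 1 / eps ^ 2) by (apply Rmult_le_reg_l with (eps ^ 2); [lra|]; field_simplify; lra).
    replace ((1 + C8 n Rr A B gmin) / eps ^ 2) with (1 / eps ^ 2 + C8 n Rr A B gmin / eps ^ 2) by (field; lra).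
    lra. }
  set (L := ln (1 / eps)).
  assert (HlnE : ln eps <= -1).
  { apply exp_le_inv. rewrite exp_ln by lra. exact He1. }
  assert (HL : L = - ln eps) by (unfold L; unfold Rdiv; rewrite Rmult_1_l, ln_Rinv; lra).
  assert (HL1 : 1 <= L) by lra.
  set (C8V := C8 n Rr A B gmin).
  assert (HC8 : 0 <= C8V).
  { unfold C8V, C8. apply Rmult_le_pos. apply pow2_ge_0. apply Rlt_le, Rinv_0_lt_compat.
    fold mminV. apply Rmult_lt_0_compat; [apply Rmult_lt_0_compat|]; lra. }
  assert (Hln1 : 0 <= ln (1 + C8V)).
  { apply exp_le_inv. rewrite exp_0, exp_ln by lra. lra. }
  assert (HDt1 : q * D (Rr - tau) <= ln (1 + C8V) + 2 * L).
  { apply exp_le_inv. eapply Rle_trans; [exact D2'|]. fold C8V.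
    rewrite exp_plus, exp_ln by lra. rewrite HL.
    replace (2 * - ln eps) with (- (INR 2 * ln eps)) by (simpl; ring).
    rewrite <- ln_pow, exp_Ropp, exp_ln by (try apply pow_lt; lra). right. field. lra. }
  assert (HDR : D Rr <= C10 n Rr A B q gmin * L).
  { unfold C10. fold C8V.
    assert (D (Rr - tau) <= (ln (1 + C8V) + 2 * L) / q).
    { apply Rmult_le_reg_l with q; [lra|]. replace (q * ((ln (1 + C8V) + 2 * L) / q)) with (ln (1 + C8V) + 2 * L) by (field; lra). lra. }
    assert (ln (1 + C8V) / q <= ln (1 + C8V) / q * L).
    { assert (0 <= ln (1 + C8V) / q) by (apply Rdiv_le_0_compat; lra). nra. }
    replace ((ln (1 + C8V) + 2 * L) / q) with (ln (1 + C8V) / q + 2 / q * L) in H by (field; lra).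
    nra. }
  assert (HMm : forall x, 0 < x < Rr -> 0 < m x <= MmV).
  { intros x Hx. split. apply Hmp; lra. unfold m, MmV, Mm. destruct (Hg x); [lra|].
    apply Rmult_le_compat; try lra. apply pow_le; lra. apply pow_incr; lra. }
  assert (HMmp : 0 < MmV) by (destruct (HMm (Rr / 2)) as [H1 H2]; lra).
  set (cd := w0 * A * q / (2 * MmV)).
  assert (Hcd : 0 <= cd).
  { unfold cd. apply Rlt_le, Rdiv_lt_0_compat; [|lra]. apply Rmult_lt_0_compat; [apply Rmult_lt_0_compat|]; lra. }
  assert (Hdoub := doubling U dU V m w F Rr us (Rr / 2) MmV w0 A q HR HUc HVc HUd HVd
    ltac:(intros; reflexivity) HMm HVle ltac:(intros x Hx; apply HwR2; lra) Hw0 HF1 HA Hq HUdec HUus ltac:(lra)).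
  set (ell := exp (kappa * ln eps)).
  assert (Hell : 0 < ell) by apply exp_pos.
  assert (Hkk1 : 1 <= INR kk) by (apply (le_INR 1); lia).
  set (h := ell / INR kk).
  assert (Hh : 0 < h) by (unfold h; apply Rdiv_lt_0_compat; lra).
  assert (Hr1a : Rr / 2 <= Rr - ell) by (unfold ell; lra).
  assert (Hr1b : Rr - ell + INR kk * h <= Rr) by (right; unfold h; field; lra).
  assert (Hit := iterate D cd (Rr / 2) Rr Hdoub Hcd kk h (Rr - ell) Hh Hr1a Hr1b).
  replace (Rr - ell + INR kk * h) with Rr in Hit by (unfold h; field; lra).
  set (c0V := c0 n Rr A q gmax).
  assert (Hc0 : 0 < c0V).
  { unfold c0V, c0. fold MmV. apply Rdiv_lt_0_compat; [|lra].
    apply Rmult_lt_0_compat; [apply Rmult_lt_0_compat|]; lra. }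
  set (E1 := exp (INR kk * (2 * (kappa - 1) * ln eps))).
  assert (Hcdh : cd * h ^ 2 = c0V / INR kk ^ 2 * exp (2 * (kappa - 1) * ln eps)).
  { unfold cd, h, w0, c0V, c0, ell. fold MmV.
    replace (2 * (kappa - 1) * ln eps) with ((kappa * ln eps + kappa * ln eps) + - (ln eps + ln eps)) by ring.
    rewrite exp_plus, exp_Ropp, !exp_plus, exp_ln by lra. simpl. field. repeat split; lra. }
  assert (HaK : (cd * h ^ 2) ^ kk = (c0V / INR kk ^ 2) ^ kk * E1).
  { rewrite Hcdh, Rpow_mult_distr, exp_pow_nat. reflexivity. }
  set (PV := Pk n Rr A q gmax kk).
  assert (HP1 : PV * (c0V / INR kk ^ 2) ^ kk = 1).
  { unfold PV, Pk. fold c0V. rewrite <- Rpow_mult_distr.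
    replace (INR kk ^ 2 / c0V * (c0V / INR kk ^ 2)) with 1 by (field; repeat split; lra).
    apply pow1. }
  assert (HPpos : 0 < PV) by (unfold PV, Pk; fold c0V; apply pow_lt; apply Rdiv_lt_0_compat; [apply pow_lt|]; lra).
  assert (HE1 : 0 < E1) by apply exp_pos.
  assert (Hr1 : D (Rr - ell) * E1 <= D Rr * PV).
  { assert (H0 : 0 <= D (Rr - ell)) by (apply HD0; lra).
    assert (H1 : (cd * h ^ 2) ^ kk <= (1 + cd * h ^ 2) ^ kk).
    { apply pow_incr. split. apply Rmult_le_pos; [lra|apply pow2_ge_0]. lra. }
    assert (H2 : D (Rr - ell) * (cd * h ^ 2) ^ kk <= D Rr) by (eapply Rle_trans; [|exact Hit]; apply Rmult_le_compat_l; lra).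
    rewrite HaK in H2.
    apply Rmult_le_compat_r with (r := PV) in H2; [|lra].
    replace (D (Rr - ell) * ((c0V / INR kk ^ 2) ^ kk * E1) * PV) with
      (D (Rr - ell) * E1 * (PV * (c0V / INR kk ^ 2) ^ kk)) in H2 by ring.
    rewrite HP1 in H2. lra. }
  assert (HE1l : / E1 <= ell).
  { unfold E1, ell. rewrite <- exp_Ropp. apply exp_le_exp.
    assert (ln eps < 0) by lra. nra. }
  assert (Hr1' : D (Rr - ell) <= D Rr * PV * ell).
  { assert (0 <= D Rr) by (apply HD0; lra).
    apply Rle_trans with (D Rr * PV * / E1).
    - apply Rmult_le_reg_r with E1; [lra|]. replace (D Rr * PV * / E1 * E1) with (D Rr * PV) by (field; lra). lra.
    - apply Rmult_le_compat_l; [|lra]. apply Rmult_le_pos; lra. }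
  assert (HUhdec : forall x y, 0 <= x -> x <= y -> y <= Rr -> Uh y <= Uh x).
  { intros x y H1 H2 H3. rewrite !HUh by lra. apply HUdec; lra. }
  assert (HintD := int_D (S n) Uh Rr us (Rr - ell) ltac:(lra) HUc HUint' HUhus HUhdec).
  rewrite !HUh in HintD by lra.
  change (Rr ^ S (S n) / INR (S (S n))) with Om' in HintD.
  fold (D (Rr - ell)) (D Rr) in HintD.
  set (C10V := C10 n Rr A B q gmin) in *.
  set (C13V := C13 n Rr A B q gmin gmax kk).
  assert (HC13 : C13V = Rr ^ S n * (Rr * PV + 1) * C10V / Om') by reflexivity.
  assert (HDR0 : 0 <= D Rr) by (apply HD0; lra).
  assert (HC10 : 0 <= C10V) by (assert (0 <= L) by lra; nra).
  assert (HRn : 0 < Rr ^ S n) by (apply pow_lt; lra).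
  assert (HusB : us <= C13V * ell * L).
  { apply Rmult_le_reg_r with Om'; [lra|].
    rewrite HC13. replace (Rr ^ S n * (Rr * PV + 1) * C10V / Om' * ell * L * Om') with
      (Rr ^ S n * ((Rr * PV + 1) * ell * (C10V * L))) by (field; lra).
    eapply Rle_trans; [exact HintD|]. apply Rmult_le_compat_l; [lra|].
    assert (D (Rr - ell) <= D Rr * PV * ell) by exact Hr1'.
    assert (0 <= D (Rr - ell)) by (apply HD0; lra).
    assert (HRP : 0 <= Rr * PV) by (apply Rmult_le_pos; lra).
    apply Rle_trans with ((Rr * PV + 1) * ell * D Rr).
    - replace (Rr - (Rr - ell)) with ell by ring.
      assert ((Rr - ell) * D (Rr - ell) <= Rr * (D Rr * PV * ell)).
      { apply Rmult_le_compat; lra. }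
      replace ((Rr * PV + 1) * ell * D Rr) with (Rr * (D Rr * PV * ell) + ell * D Rr) by ring.
      lra.
    - apply Rmult_le_compat_l; [|lra]. apply Rmult_le_pos; lra. }
  assert (Hus0 : 0 <= us).
  { assert (H1 : exp 0 <= exp (p * us)).
    { rewrite exp_0. apply Rmult_le_reg_r with Om'; [lra|]. lra. }
    apply exp_le_inv in H1. apply (Rmult_le_reg_l p); [lra|]. rewrite Rmult_0_r. exact H1. }
  assert (HellL : ell * L <= 1 / kappa).
  { rewrite HL. unfold ell. set (y := - (kappa * ln eps)).
    assert (Hy : 0 <= y).
    { unfold y. assert (kappa * ln eps <= kappa * 0) by (apply Rmult_le_compat_l; lra). lra. }
    replace (kappa * ln eps) with (- y) by (unfold y; ring).
    replace (- ln eps) with (y / kappa) by (unfold y; field; lra).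
    assert (H1 := exp_ineq1_le y).
    assert (H2 : exp (- y) * exp y = 1) by (rewrite <- exp_plus; replace (- y + y) with 0 by ring; apply exp_0).
    assert (Hey : 0 < exp (- y)) by apply exp_pos.
    assert (H3 : exp (- y) * y <= 1).
    { assert (exp (- y) * y <= exp (- y) * exp y) by (apply Rmult_le_compat_l; lra). lra. }
    apply Rmult_le_reg_r with kappa; [lra|].
    replace (exp (- y) * (y / kappa) * kappa) with (exp (- y) * y) by (field; lra).
    replace (1 / kappa * kappa) with 1 by (field; lra). exact H3. }
  assert (HC13p : 0 <= C13V).
  { rewrite HC13. apply Rmult_le_pos; [|apply Rlt_le, Rinv_0_lt_compat; lra].
    apply Rmult_le_pos; [|lra]. apply Rmult_le_pos; [lra|].
    assert (0 <= Rr * PV) by (apply Rmult_le_pos; lra). lra. }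
  assert (HusU0 : us <= C13V / kappa).
  { eapply Rle_trans; [exact HusB|]. rewrite Rmult_assoc.
    replace (C13V / kappa) with (C13V * (1 / kappa)) by (field; lra).
    apply Rmult_le_compat_l; lra. }
  set (EE := exp (p * (C13V / kappa))).
  assert (HpU : 0 <= p * us) by (apply Rmult_le_pos; lra).
  assert (HexpB : exp (p * us) - 1 <= p * us * EE).
  { assert (H1 := exp_ineq1_le (- (p * us))).
    assert (H2 : exp (- (p * us)) * exp (p * us) = 1) by (rewrite <- exp_plus; replace (- (p * us) + p * us) with 0 by ring; apply exp_0).
    assert (H3 : exp (p * us) <= EE) by (apply exp_le_exp; apply Rmult_le_compat_l; lra).
    assert (H4 : 0 < exp (p * us)) by apply exp_pos.
    assert (H5 : (1 + - (p * us)) * exp (p * us) <= exp (- (p * us)) * exp (p * us))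
      by (apply Rmult_le_compat_r; lra).
    rewrite H2 in H5.
    assert (H6 : p * us * exp (p * us) <= p * us * EE) by (apply Rmult_le_compat_l; lra).
    assert (E : (1 + - (p * us)) * exp (p * us) = exp (p * us) - p * us * exp (p * us)) by ring.
    lra. }
  assert (HIPb : Rabs (IP - Rr ^ S (S n) / INR (S (S n))) <= Om' * p * EE * us).
  { change (Rr ^ S (S n) / INR (S (S n))) with Om'. rewrite Rabs_pos_eq by lra.
    assert (H1 : Om' * (exp (p * us) - 1) <= Om' * (p * us * EE)) by (apply Rmult_le_compat_l; lra).
    replace (Om' * p * EE * us) with (Om' * (p * us * EE)) by ring.
    assert (E : Om' * (exp (p * us) - 1) = exp (p * us) * Om' - Om') by ring.
    lra. }
  assert (Hrel : IQ * (exp (p * us) * exp (q * us)) = B * IP / A).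
  { rewrite <- exp_plus. replace (p * us + q * us) with (ln (mu / lam)) by (unfold us; field; lra).
    rewrite exp_ln by (apply Rdiv_lt_0_compat; lra). unfold mu, lam. field. repeat split; lra. }
  assert (HIQb : Rabs (IQ - B * Rr ^ S (S n) / (A * INR (S (S n)))) <= B / A * Om' * (p + q) * us).
  { replace (B * Rr ^ S (S n) / (A * INR (S (S n)))) with (B / A * Om')
      by (unfold Om', Om; field; split; [apply not_0_INR; lia|lra]).
    assert (HeP : 1 <= exp (p * us)) by (rewrite <- exp_0; apply exp_le_exp; lra).
    assert (HeQ : 1 <= exp (q * us)) by (rewrite <- exp_0; apply exp_le_exp; apply Rmult_le_pos; lra).
    assert (HIQp : 0 < IQ) by lra.
    assert (HBA : 0 < B / A) by (apply Rdiv_lt_0_compat; lra).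
    assert (HBAO : 0 < B / A * Om') by (apply Rmult_lt_0_compat; lra).
    assert (Hup : IQ <= B / A * Om').
    { assert (H1 : IQ * exp (p * us) * exp (q * us) <= B / A * Om' * exp (p * us)).
      { replace (IQ * exp (p * us) * exp (q * us)) with (B * IP / A) by (rewrite <- Hrel; ring).
        replace (B * IP / A) with (B / A * IP) by (field; lra).
        replace (B / A * Om' * exp (p * us)) with (B / A * (exp (p * us) * Om')) by ring.
        apply Rmult_le_compat_l; lra. }
      assert (HX : 0 < IQ * exp (p * us)) by (apply Rmult_lt_0_compat; [lra|apply exp_pos]).
      assert (H2 : IQ * exp (p * us) * 1 <= IQ * exp (p * us) * exp (q * us)) by (apply Rmult_le_compat_l; lra).
      apply Rmult_le_reg_r with (exp (p * us)); [apply exp_pos|]. lra. }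
    assert (Hlo : B / A * Om' * (1 - (p + q) * us) <= IQ).
    { set (x := (p + q) * us).
      assert (Hx1 := exp_ineq1_le (- x)).
      assert (H2 : exp (- x) * (exp (p * us) * exp (q * us)) = 1).
      { rewrite <- !exp_plus. replace (- x + (p * us + q * us)) with 0 by (unfold x; ring). apply exp_0. }
      assert (H3 : IQ = B / A * IP * exp (- x)).
      { replace IQ with (IQ * (exp (p * us) * exp (q * us)) * exp (- x)) by (rewrite Rmult_assoc, (Rmult_comm (exp (p * us) * exp (q * us))), H2; ring).
        rewrite Hrel. field. lra. }
      rewrite H3. assert (0 < exp (- x)) by apply exp_pos.
      assert (B / A * Om' * (1 - x) <= B / A * Om' * exp (- x)) by (apply Rmult_le_compat_l; lra).
      assert (B / A * Om' * exp (- x) <= B / A * IP * exp (- x)) by (apply Rmult_le_compat_r; [lra|]; apply Rmult_le_compat_l; lra).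
      lra. }
    rewrite Rabs_left1 by lra.
    assert (E : B / A * Om' * (1 - (p + q) * us) = B / A * Om' - B / A * Om' * (p + q) * us) by ring.
    lra. }
  unfold Rpower. fold ell. fold L.
  unfold Cf. fold Om'. fold C13V. fold EE.
  eapply Rle_trans; [apply Rplus_le_compat; [exact HIPb|exact HIQb]|].
  replace (Om' * p * EE * us + B / A * Om' * (p + q) * us) with
    ((Om' * p * EE + B / A * Om' * (p + q)) * us) by ring.
  assert (HK : 0 <= Om' * p * EE + B / A * Om' * (p + q)).
  { assert (0 < EE) by apply exp_pos.
    assert (0 < B / A) by (apply Rdiv_lt_0_compat; lra).
    assert (0 < / A) by (apply Rinv_0_lt_compat; lra). assert (0 <= Om') by lra.
    apply Rplus_le_le_0_compat; [apply Rmult_le_pos; [apply Rmult_le_pos|]|apply Rmult_le_pos; [apply Rmult_le_pos|]]; lra. }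
  set (K := Om' * p * EE + B / A * Om' * (p + q)) in *.
  replace (K * C13V * ell * L) with (K * (C13V * ell * L)) by ring.
  apply Rmult_le_compat_l; [exact HK|exact HusB].
Qed.

Theorem lemma3p9 :
  forall (N : nat) (Rr A B p q : R) (g : R -> R) (U : R -> R -> R),
    (2 <= N)%nat -> 0 < Rr ->
    smooth_closed 0 Rr g -> (forall x, Icc 0 Rr x -> 0 < g x) ->
    0 < A -> A < B -> 0 < p -> 0 < q ->
    (forall eps, 0 < eps -> solves_Nstar N Rr A B p q g eps (U eps)) ->
    forall kappa, 0 < kappa < 1 ->
      exists C, 0 < C /\
        exists eps0, 0 < eps0 /\
          forall eps, 0 < eps < eps0 ->
            Rabs (Ip N Rr p (U eps) - Rr ^ N / INR N)
            + Rabs (Iq N Rr q (U eps) - B * Rr ^ N / (A * INR N))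
            <= C * Rpower eps kappa * ln (1 / eps).
Proof.
  intros N Rr A B p q g U HN HR Hg Hgpos HA HAB Hp Hq Hsol kappa Hk.
  destruct N as [|[|n]]; try lia.
  destruct Hg as [d [Hd Hgs]].
  assert (Hgex : forall x, 0 <= x <= Rr -> ex_derive g x).
  { intros x Hx. exact (Hgs 1%nat x ltac:(lra)). }
  assert (Hgd : forall x, 0 <= x <= Rr -> is_derive g x (Derive g x)).
  { intros x Hx. apply Derive_correct, Hgex, Hx. }
  assert (Hgcont : forall x, 0 <= x <= Rr -> continuity_pt g x).
  { intros x Hx. apply continuity_pt_filterlim. apply (ex_derive_continuous (K := R_AbsRing) (V := R_NormedModule)), Hgex, Hx. }
  assert (Hgc : forall x, continuity_pt (fun y => g (clamp 0 Rr y)) x).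
  { intros x. apply (continuity_pt_comp (clamp 0 Rr) g x). apply cp_clamp; lra.
    apply Hgcont. apply clamp_in; lra. }
  destruct (continuity_ab_min g 0 Rr ltac:(lra) Hgcont) as [xm [Hxm1 Hxm2]].
  destruct (continuity_ab_maj g 0 Rr ltac:(lra) Hgcont) as [xM [HxM1 HxM2]].
  set (gmin := g xm). set (gmax := g xM).
  assert (Hgmin : 0 < gmin) by (apply Hgpos; unfold Icc; lra).
  assert (Hgb : forall x, 0 <= x <= Rr -> gmin <= g x <= gmax) by (intros; split; auto).
  destruct (archimed_cor1 ((2 - 2 * kappa) / kappa)) as [kk [Hkk1 Hkk2]].
  { apply Rdiv_lt_0_compat; lra. }
  assert (HkkR : 0 < INR kk) by (apply lt_0_INR; lia).
  assert (Hkk3 : kappa <= INR kk * (2 - 2 * kappa)).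
  { left. apply Rmult_lt_reg_l with (/ INR kk). apply Rinv_0_lt_compat; lra.
    replace (/ INR kk * kappa) with (kappa * / INR kk) by ring.
    replace (/ INR kk * (INR kk * (2 - 2 * kappa))) with ((2 - 2 * kappa) / kappa * kappa) by (field; lra).
    apply Rmult_lt_compat_l with (r := kappa) in Hkk1; [|lra]. lra. }
  set (Cf0 := Cf n Rr A B p q gmin gmax kk kappa).
  exists (Rabs Cf0 + 1). split; [pose proof (Rabs_pos Cf0); lra|].
  assert (HOm : 0 < Om n Rr).
  { unfold Om. apply Rdiv_lt_0_compat. apply pow_lt; lra. apply lt_0_INR; lia. }
  assert (HMass : 0 < Mass n Rr A B) by (unfold Mass; apply Rmult_lt_0_compat; lra).
  assert (Hmmin : 0 < mmin n Rr gmin) by (unfold mmin; apply Rmult_lt_0_compat; [apply pow_lt|]; lra).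
  set (e2 := Rr * Mass n Rr A B / (2 * mmin n Rr gmin)).
  assert (He2 : 0 < e2) by (unfold e2; apply Rdiv_lt_0_compat; [apply Rmult_lt_0_compat|]; lra).
  set (e3 := exp (ln (Rr / 2) / kappa)).
  exists (Rmin (exp (-1)) (Rmin e2 e3)). split.
  { apply Rmin_pos; [apply exp_pos|apply Rmin_pos; [lra|apply exp_pos]]. }
  intros eps [He Heps].
  assert (H1 := Rmin_l (exp (-1)) (Rmin e2 e3)). assert (H2 := Rmin_r (exp (-1)) (Rmin e2 e3)).
  assert (H3 := Rmin_l e2 e3). assert (H4 := Rmin_r e2 e3).
  assert (Hexp3 : exp (kappa * ln eps) <= Rr / 2).
  { assert (Hl : ln eps <= ln (Rr / 2) / kappa).
    { apply exp_le_inv. rewrite exp_ln by lra. fold e3. lra. }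
    rewrite <- (exp_ln (Rr / 2)) by lra. apply exp_le_exp.
    apply Rmult_le_reg_l with (/ kappa). apply Rinv_0_lt_compat; lra.
    replace (/ kappa * (kappa * ln eps)) with (ln eps) by (field; lra).
    replace (/ kappa * ln (Rr / 2)) with (ln (Rr / 2) / kappa) by (field; lra). exact Hl. }
  assert (Hmain := per_eps n Rr A B p q g gmin gmax kappa kk eps (U eps) HR HA HAB Hp Hq Hk
    Hgb Hgmin Hgd Hgc ltac:(lia) Hkk3 He ltac:(lra) ltac:(fold e2; lra) Hexp3 (Hsol eps He)).
  fold Cf0 in Hmain. eapply Rle_trans; [exact Hmain|].
  assert (HX : 0 <= Rpower eps kappa * ln (1 / eps)).
  { apply Rmult_le_pos. unfold Rpower. left; apply exp_pos.
    assert (eps < 1) by (assert (exp (-1) < exp 0) by (apply exp_increasing; lra); rewrite exp_0 in *; lra).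
    unfold Rdiv. rewrite Rmult_1_l, ln_Rinv by lra.
    assert (ln eps < 0). { apply exp_lt_inv. rewrite exp_ln, exp_0 by lra. lra. } lra. }
  rewrite !Rmult_assoc. apply Rmult_le_compat_r; [exact HX|].
  pose proof (Rle_abs Cf0). lra.
Qed.
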